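(* Let $p>3$ be a prime and let $$F(p-1,p-1)=\frac{18p-15}{4^{4p-4}}\binom{6p-6}{3p-3}\binom{3p-3}{p-1}.$$ Then $F(p-1,p-1)\equiv 15p^2\big(-1-6p+8pq_p(2)\big)\pmod{p^4}$.
   Context: $q_p(2)=(2^{p-1}-1)/p$ is the Fermat quotient. (This is the value at $n=k=p-1$ of $F(n,k)=(-1)^{n+k}\frac{20n-2k+3}{4^{5n-k}}\frac{\binom{2n}{n}\binom{4n+2k}{2n+k}\binom{2n-k}{n}\binom{2n+k}{2k}}{\binom{2k}{k}}$.) Congruences between rationals modulo $p^m$ mean the difference is $p^m$ times a rational with denominator prime to $p$. *)

(* Defs.v *)
From mathcomp Require Import all_boot all_order all_algebra.
Set Implicit Arguments. Unset Strict Implicit. Unset Printing Implicit Defensive.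
Import Order.TTheory GRing.Theory Num.Theory.
Local Open Scope ring_scope.

Definition fermat_quot2 (p : nat) : rat := ((2 ^+ p.-1 - 1) / p%:R)%R.

Definition rat_cong (p m : nat) (x y : rat) : Prop :=
  exists r : rat, x - y = (p ^ m)%:R * r /\ ~~ (p %| `|denq r|)%N.

Definition Fpp (p : nat) : rat :=
  ((18 * p - 15)%:R / 4 ^+ (4 * p - 4)) * ('C(6 * p - 6, 3 * p - 3))%:R
    * ('C(3 * p - 3, p - 1))%:R.

(* Main.v *)
Require Import Defs.
From mathcomp Require Import all_boot all_order all_algebra.
From mathcomp Require Import cyclic.
From mathcomp Require Import ring lra zify.
From Stdlib Require BinNat.
Module Import Lit. Import BinNat. Number Notation BinNums.N N.of_num_uint N.to_num_uint : N_scope. End Lit.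
Delimit Scope N_scope with bN.
Set Implicit Arguments. Unset Strict Implicit. Unset Printing Implicit Defensive.
Import Order.TTheory GRing.Theory Num.Theory.

Lemma dvd_bin_mul p m j : prime p -> ~~ (p %| j) -> p %| 'C(m * p, j).
Proof.
move=> pp npj; case: j npj => [|j] npj; first by rewrite dvdn0 in npj.
have := mul_bin_diag (m * p) j.
move=> e; have : p %| j.+1 * 'C(m * p, j.+1) by rewrite -e dvdn_mulr // dvdn_mull.
by rewrite Gauss_dvdr // prime_coprime.
Qed.

Lemma babbage p a b : prime p -> 'C(a * p, b * p) = 'C(a, b) %[mod p ^ 2].
Proof.
move=> pp; have p0 : 0 < p by apply: prime_gt0.
elim: a b => [|a IH] b.
  by rewrite mul0n !bin0n muln_eq0 (negPf (lt0n_neq0 p0)) orbF.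
case: b => [|b]; first by rewrite mul0n !bin0.
rewrite binS -modnDm -(IH b.+1) -(IH b) modnDm mulSn -binomial.Vandermonde.
rewrite -(big_mkord xpredT (fun j => 'C(p, j) * 'C(a * p, b.+1 * p - j))).
have hp : p <= b.+1 * p by rewrite mulSn leq_addr.
rewrite (big_cat_nat _ (n := 1)) //=.
rewrite big_nat1 bin0 mul1n subn0.
rewrite (big_cat_nat _ (n := p)) //=; last exact: leqW.
rewrite (big_cat_nat _ (m := p) (n := p.+1)) //=.
rewrite big_nat1 binn mul1n.
rewrite [X in _ + (_ + (_ + X))]big1_seq; last first.
  move=> i /andP [_]; rewrite mem_index_iota => /andP [hi _].
  by rewrite bin_small // mul0n.
have -> : b.+1 * p - p = b * p by rewrite mulSn addKn.
set R := \sum_(1 <= i < p) _.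
have hR : p ^ 2 %| R.
  rewrite /R big_nat; apply: dvdn_sum => i /andP [h1 h2].
  rewrite expnS expn1 dvdn_mul //; first by apply: prime_dvd_bin => //; rewrite h1 h2.
  apply: dvd_bin_mul => //.
  rewrite mulSnr -addnBA; last exact: ltnW.
  rewrite dvdn_addr; last exact: dvdn_mull.
  apply/negP => /dvdn_leq; rewrite subn_gt0 => /(_ h2).
  lia.
case/dvdnP: hR => t ->.
by rewrite addn0 addnCA modnMDl.
Qed.

Local Open Scope ring_scope.

Lemma pint_den p (s : int) (d : nat) : prime p -> (0 < d)%N -> ~~ (p %| d)%N ->
  ~~ (p %| `|denq (s%:~R / d%:R)|)%N.
Proof.
move=> pp d0 nd.
have -> : (d%:R : rat) = (d%:Z)%:~R by rewrite pmulrn.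
have h1 : d%:Z != 0 by rewrite eqz_nat -lt0n.
have h2 : ~~ (p %| `|d%:Z|)%N by [].
move: h1 h2; case: divqP => [|k x k0] //=.
rewrite abszM Euclid_dvdM // negb_or => _ /andP [] //.
Qed.

Definition Ep {R : comNzRingType} (P : R) : R := (3*P-1)*(3*P-2)*(2*P-1).
Definition Dp {R : comNzRingType} (P : R) : R := (6*P-1)*(6*P-2)*(6*P-3)*(6*P-4)*(6*P-5).

Lemma fact_neq0 k : (k`!%:R : rat) != 0.
Proof. by rewrite pnatr_eq0 -lt0n fact_gt0. Qed.

Lemma binr n m : (m <= n)%N -> ('C(n,m)%:R : rat) = n`!%:R / (m`!%:R * (n-m)`!%:R).
Proof.
move=> h; rewrite -(bin_fact h) !natrM mulfK // mulf_neq0 // ?fact_neq0 //.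
Qed.

Lemma fact_id n :
 ('C(6*n,3*n)%:R * 'C(3*n,n)%:R) * Dp ((n.+1)%:R : rat) =
   ('C(6*n.+1, 3*n.+1) * 'C(3*n.+1, n.+1))%:R * (n.+1)%:R^+2 * Ep ((n.+1)%:R : rat).
Proof.
rewrite natrM !binr; try lia.
have -> : (6*n - 3*n = 3*n)%N by lia.
have -> : (3*n - n = 2*n)%N by lia.
have -> : (6*n.+1 - 3*n.+1 = 3*n.+1)%N by lia.
have -> : (3*n.+1 - n.+1 = 2*n.+1)%N by lia.
have -> : (6 * n.+1 = (6*n).+1.+1.+1.+1.+1.+1)%N by lia.
have -> : (3 * n.+1 = (3*n).+1.+1.+1)%N by lia.
have -> : (2 * n.+1 = (2*n).+1.+1)%N by lia.
rewrite !factS !natrM /Dp /Ep.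
have f1 := fact_neq0 (6*n); have f2 := fact_neq0 (3*n);
have f3 := fact_neq0 (2*n); have f4 := fact_neq0 n.
have hn : (0 : rat) <= n%:R by apply: ler0n.
field; rewrite f2 f3 f4 /=.
by repeat (apply/andP; split); apply: lt0r_neq0; lra.
Qed.

Lemma natN_add (a b : BinNums.N) : nat_of_bin (BinNat.N.add a b) = (nat_of_bin a + nat_of_bin b)%N.
Proof. by case: a b => [|a] [|b] //=; rewrite ?addn0 // nat_of_add_pos. Qed.

Lemma natN_mul (a b : BinNums.N) : nat_of_bin (BinNat.N.mul a b) = (nat_of_bin a * nat_of_bin b)%N.
Proof. by case: a b => [|a] [|b] //=; rewrite ?muln0 // nat_of_mul_pos. Qed.

Fixpoint binN (n k : nat) : BinNums.N :=
  match n, k with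
  | _, 0%N => 1%bN
  | 0%N, _.+1 => 0%bN
  | n'.+1, k'.+1 => BinNat.N.add (binN n' k) (binN n' k')
  end.

Lemma binNE n k : nat_of_bin (binN n k) = 'C(n, k).
Proof.
elim: n k => [|n IH] [|k] //=.
by rewrite natN_add !IH binS.
Qed.

Lemma stepC n m (Y X : BinNums.N) : 'C(n, m) = nat_of_bin Y ->
 nat_of_bin (BinNat.N.mul (bin_of_nat n.+1) Y) = nat_of_bin (BinNat.N.mul (bin_of_nat m.+1) X) ->
 'C(n.+1, m.+1) = nat_of_bin X.
Proof.
rewrite !natN_mul !bin_of_natK => hC h; apply/eqP.
rewrite -(eqn_pmul2l (ltn0Sn m)) -mul_bin_diag /= hC h //.
Qed.

Lemma C12_0 : 'C(12, 0) = nat_of_bin 1%bN.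
Proof. by rewrite bin0. Qed.
Lemma C13_1 : 'C(13, 1) = nat_of_bin 13%bN.
Proof. apply: (stepC (Y := 1%bN) C12_0); by apply: (congr1 nat_of_bin); vm_compute. Qed.
Lemma C14_2 : 'C(14, 2) = nat_of_bin 91%bN.
Proof. apply: (stepC (Y := 13%bN) C13_1); by apply: (congr1 nat_of_bin); vm_compute. Qed.
Lemma C15_3 : 'C(15, 3) = nat_of_bin 455%bN.
Proof. apply: (stepC (Y := 91%bN) C14_2); by apply: (congr1 nat_of_bin); vm_compute. Qed.
Lemma C16_4 : 'C(16, 4) = nat_of_bin 1820%bN.
Proof. apply: (stepC (Y := 455%bN) C15_3); by apply: (congr1 nat_of_bin); vm_compute. Qed.
Lemma C17_5 : 'C(17, 5) = nat_of_bin 6188%bN.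
Proof. apply: (stepC (Y := 1820%bN) C16_4); by apply: (congr1 nat_of_bin); vm_compute. Qed.
Lemma C18_6 : 'C(18, 6) = nat_of_bin 18564%bN.
Proof. apply: (stepC (Y := 6188%bN) C17_5); by apply: (congr1 nat_of_bin); vm_compute. Qed.
Lemma C19_7 : 'C(19, 7) = nat_of_bin 50388%bN.
Proof. apply: (stepC (Y := 18564%bN) C18_6); by apply: (congr1 nat_of_bin); vm_compute. Qed.
Lemma C20_8 : 'C(20, 8) = nat_of_bin 125970%bN.
Proof. apply: (stepC (Y := 50388%bN) C19_7); by apply: (congr1 nat_of_bin); vm_compute. Qed.
Lemma C21_9 : 'C(21, 9) = nat_of_bin 293930%bN.
Proof. apply: (stepC (Y := 125970%bN) C20_8); by apply: (congr1 nat_of_bin); vm_compute. Qed.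
Lemma C22_10 : 'C(22, 10) = nat_of_bin 646646%bN.
Proof. apply: (stepC (Y := 293930%bN) C21_9); by apply: (congr1 nat_of_bin); vm_compute. Qed.
Lemma C23_11 : 'C(23, 11) = nat_of_bin 1352078%bN.
Proof. apply: (stepC (Y := 646646%bN) C22_10); by apply: (congr1 nat_of_bin); vm_compute. Qed.
Lemma C24_12 : 'C(24, 12) = nat_of_bin 2704156%bN.
Proof. apply: (stepC (Y := 1352078%bN) C23_11); by apply: (congr1 nat_of_bin); vm_compute. Qed.
Lemma C24 : 'C(24, 12) = nat_of_bin 2704156%bN.
Proof. exact: C24_12. Qed.

Lemma C12 : 'C(12, 4) = nat_of_bin 495%bN.
Proof. by rewrite -binNE; apply: (congr1 nat_of_bin); vm_compute. Qed.

Lemma E416 : (4 ^ 16 = nat_of_bin 4294967296%bN)%N.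
Proof.
have h8 : (4 ^ 8 = nat_of_bin 65536%bN)%N by [].
rewrite -[16%N]/(8 + 8)%N expnD h8 -natN_mul.
by apply: (congr1 nat_of_bin); vm_compute.
Qed.

Lemma H5 : (75 * nat_of_bin 2704156%bN * nat_of_bin 495%bN
   + 625 * nat_of_bin 229190626740%bN
   = 33375 * nat_of_bin 4294967296%bN)%N.
Proof.
have e1 := natN_add (BinNat.N.mul (BinNat.N.mul 75%bN 2704156%bN) 495%bN)
   (BinNat.N.mul 625%bN 229190626740%bN).
have e2 := natN_mul (BinNat.N.mul 75%bN 2704156%bN) 495%bN.
have e3 := natN_mul 75%bN 2704156%bN.
have e4 := natN_mul 625%bN 229190626740%bN.
have e5 := natN_mul 33375%bN 4294967296%bN.
have t1 := esym (etrans e2 (congr1 (fun z => (z * nat_of_bin 495%bN)%N) e3)).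
have t3 := etrans (f_equal2 addn t1 (esym e4)) (esym e1).
have t4 : BinNat.N.add (BinNat.N.mul (BinNat.N.mul 75%bN 2704156%bN) 495%bN)
   (BinNat.N.mul 625%bN 229190626740%bN) = BinNat.N.mul 33375%bN 4294967296%bN.
  vm_compute. reflexivity.
exact (etrans t3 (etrans (congr1 nat_of_bin t4) e5)).
Qed.

Lemma case5_gen (c d k Q : nat) : (75 * c * d + 625 * k = 33375 * Q)%N ->
  (Q%:R : rat) = 4 ^+ 16 -> (0 < Q)%N -> ~~ (5 %| Q)%N ->
  rat_cong 5 4 (75%:R / 4 ^+ 16 * c%:R * d%:R)
    (15 * (5%:R) ^+ 2 * (-1 - 6 * 5%:R + 8 * 5%:R * fermat_quot2 5)).
Proof.
have hq : fermat_quot2 5 = 3 by rewrite /fermat_quot2 (_ : 5.-1 = 4)%N.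
rewrite hq; clear hq.
move=> H.
have Hr : 75%:R * c%:R * d%:R + 625%:R * k%:R = 33375%:R * Q%:R :> rat.
  have h := congr1 (GRing.natmul (1 : rat)) H.
  rewrite natrD in h.
  rewrite !natrM in h.
  exact: h.
clear H.
move=> hQ Q0 Q5.
rewrite -hQ; clear hQ.
have Q0' : (Q%:R : rat) != 0 by rewrite pnatr_eq0 -lt0n.
exists ((- k%:Z)%:~R / Q%:R); split; last first.
  apply: pint_den; [exact: (isT : prime 5) | exact: Q0 | exact: Q5].
have hAB : 75%:R * c%:R * d%:R + 625%:R * k%:R - 33375%:R * Q%:R = 0 :> rat.
  by apply/eqP; rewrite subr_eq0; apply/eqP; exact: Hr.
rewrite natrX mulrNz -pmulrn.
apply/eqP; rewrite -subr_eq0; apply/eqP.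
rewrite (_ : _ - _ = (75%:R * c%:R * d%:R + 625%:R * k%:R - 33375%:R * Q%:R) / Q%:R).
  apply: (etrans (congr1 (fun z => z / Q%:R) hAB)); exact: mul0r.
by field.
Qed.

Lemma case5 : rat_cong 5 4 (Fpp 5)
    (15 * (5%:R) ^+ 2 * (-1 - 6 * 5%:R + 8 * 5%:R * fermat_quot2 5)).
Proof.
rewrite /Fpp.
rewrite (_ : (18 * 5 - 15 = 75)%N) // (_ : (4 * 5 - 4 = 16)%N) //.
rewrite (_ : (6 * 5 - 6 = 24)%N) // (_ : (3 * 5 - 3 = 12)%N) // (_ : (5 - 1 = 4)%N) //.
rewrite C24 C12.
apply: case5_gen; first exact: H5.
- by rewrite -E416 natrX.
- by rewrite -E416 expn_gt0.
- by rewrite -E416 Euclid_dvdX.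
Qed.


Definition Spoly {R : comNzRingType} (P q k : R) : R := ((64 * 1000 + 800)) + (30 * k) + (- (86 * 1000 + 400) * q) + ((64 * 1000 + 800) * q^+2) + (- (498 * 1000 + 960) * P) + (- 231 * P * k) + (((1 * 1000 + 183) * 1000 + 680) * P * q) + (- ((1 * 1000 + 190) * 1000 + 160) * P * q^+2) + ((302 * 1000 + 400) * P * q^+3) + (((1 * 1000 + 380) * 1000 + 240) * P^+2) + (639 * P^+2 * k) + (- ((5 * 1000 + 832) * 1000 + 0) * P^+2 * q) + (((8 * 1000 + 516) * 1000 + 880) * P^+2 * q^+2) + (- ((4 * 1000 + 747) * 1000 + 680) * P^+2 * q^+3) + ((680 * 1000 + 400) * P^+2 * q^+4) + (- ((1 * 1000 + 632) * 1000 + 960) * P^+3) + (- 756 * P^+3 * k) + (((13 * 1000 + 219) * 1000 + 200) * P^+3 * q) + (- ((30 * 1000 + 326) * 1000 + 400) * P^+3 * q^+2) + (((28 * 1000 + 697) * 1000 + 760) * P^+3 * q^+3) + (- ((10 * 1000 + 77) * 1000 + 480) * P^+3 * q^+4) + ((907 * 1000 + 200) * P^+3 * q^+5) + ((699 * 1000 + 840) * P^+4) + (324 * P^+4 * k) + (- ((13 * 1000 + 996) * 1000 + 800) * P^+4 * q) + (((56 * 1000 + 764) * 1000 + 800) * P^+4 * q^+2) + (- ((87 * 1000 + 91) * 1000 + 200) * P^+4 * q^+3) + (((56 * 1000 + 284) * 1000 + 200) * P^+4 * q^+4) + (- ((13 * 1000 + 33) * 1000 + 440) * P^+4 * q^+5)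 + ((756 * 1000 + 0) * P^+4 * q^+6) + (((5 * 1000 + 598) * 1000 + 720) * P^+5 * q) + (- ((53 * 1000 + 187) * 1000 + 840) * P^+5 * q^+2) + (((141 * 1000 + 523) * 1000 + 200) * P^+5 * q^+3) + (- ((155 * 1000 + 131) * 1000 + 200) * P^+5 * q^+4) + (((69 * 1000 + 521) * 1000 + 760) * P^+5 * q^+5) + (- ((10 * 1000 + 659) * 1000 + 600) * P^+5 * q^+6) + ((388 * 1000 + 800) * P^+5 * q^+7) + (((19 * 1000 + 595) * 1000 + 520) * P^+6 * q^+2) + (- ((117 * 1000 + 573) * 1000 + 120) * P^+6 * q^+3) + (((225 * 1000 + 892) * 1000 + 800) * P^+6 * q^+4) + (- ((179 * 1000 + 625) * 1000 + 600) * P^+6 * q^+5) + (((55 * 1000 + 172) * 1000 + 880) * P^+6 * q^+6) + (- ((5 * 1000 + 412) * 1000 + 960) * P^+6 * q^+7) + ((113 * 1000 + 400) * P^+6 * q^+8) + (((39 * 1000 + 191) * 1000 + 40) * P^+7 * q^+3) + (- ((166 * 1000 + 561) * 1000 + 920) * P^+7 * q^+4) + (((239 * 1000 + 500) * 1000 + 800) * P^+7 * q^+5) + (- ((136 * 1000 + 80) * 1000 + 0) * P^+7 * q^+6) + (((27 * 1000 + 427) * 1000 + 680) * P^+7 * q^+7) + (- ((1 * 1000 + 564) * 1000 + 380) * P^+7 * q^+8) + ((14 * 1000 + 400) * P^+7 * q^+9) + (((48 * 1000 + 988) * 1000 + 800) * P^+8 * q^+4) + (- ((156 * 1000 + 764)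 * 1000 + 160) * P^+8 * q^+5) + (((168 * 1000 + 739) * 1000 + 200) * P^+8 * q^+6) + (- ((65 * 1000 + 318) * 1000 + 400) * P^+8 * q^+7) + (((7 * 1000 + 802) * 1000 + 460) * P^+8 * q^+8) + (- (197 * 1000 + 280) * P^+8 * q^+9) + (((39 * 1000 + 191) * 1000 + 40) * P^+9 * q^+5) + (- ((97 * 1000 + 977) * 1000 + 600) * P^+9 * q^+6) + (((76 * 1000 + 204) * 1000 + 800) * P^+9 * q^+7) + (- ((18 * 1000 + 79) * 1000 + 200) * P^+9 * q^+8) + ((972 * 1000 + 0) * P^+9 * q^+9) + (((19 * 1000 + 595) * 1000 + 520) * P^+10 * q^+6) + (- ((39 * 1000 + 191) * 1000 + 40) * P^+10 * q^+7) + (((20 * 1000 + 23) * 1000 + 200) * P^+10 * q^+8) + (- ((2 * 1000 + 203) * 1000 + 200) * P^+10 * q^+9) + (((5 * 1000 + 598) * 1000 + 720) * P^+11 * q^+7) + (- ((9 * 1000 + 97) * 1000 + 920) * P^+11 * q^+8) + (((2 * 1000 + 332) * 1000 + 800) * P^+11 * q^+9) + ((699 * 1000 + 840) * P^+12 * q^+8) + (- (933 * 1000 + 120) * P^+12 * q^+9).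

Lemma keyring (R : comNzRingType) (P q k : R) :
 (18*P-15) * (60+P^+2*k) * P^+2 * Ep P - 15*P^+2*(-1-6*P+8*P*q) * Dp P * (1+P*q)^+8
 = P^+4 * Spoly P q k.
Proof. rewrite /Spoly /Ep /Dp. ring. Qed.

Lemma mor (p z k : int) : (Spoly p z k)%:~R = Spoly (p%:~R : rat) z%:~R k%:~R.
Proof. rewrite /Spoly. ring. Qed.


Lemma final_alg (P q k c12 : rat) : Dp P != 0 -> 1 + P*q != 0 ->
  c12 * Dp P = (60 + P^+2*k) * P^+2 * Ep P ->
  (18*P-15) / (1+P*q)^+8 * c12 - 15*P^+2*(-1 - 6*P + 8*P*q)
    = P^+4 * (Spoly P q k / (Dp P * (1+P*q)^+8)).
Proof.
move=> hD hQ hc.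
have e : c12 = (60 + P^+2*k) * P^+2 * Ep P / Dp P.
  by rewrite -hc mulfK.
rewrite e [P^+4 * _]mulrA -(keyring P q k).
move: hD; set E := Ep P; set D := Dp P; clearbody E D => hD.
by field; rewrite ?hD ?hQ.
Qed.

Lemma fermat2 n : prime n.+1 -> (2 < n.+1)%N -> (2 ^ n = 2 ^ n %/ n.+1 * n.+1 + 1)%N.
Proof.
move=> pp p2.
have h : (2 ^ n = 1 %[mod n.+1])%N.
  have := Euler_exp_totient (a := 2) (n := n.+1).
  rewrite totient_prime //=; apply.
  rewrite coprime_sym prime_coprime // ; apply/negP => /dvdn_leq; lia.
rewrite {1}(divn_eq (2 ^ n) n.+1) h modn_small //; lia.
Qed.

Lemma ndvd6 n j : (6 <= n)%N -> (0 < j < 6)%N -> ~~ (n.+1 %| 6 * n + j)%N.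
Proof.
move=> n6 hj; apply/negP => h.
have e : (6 * n.+1 = (6 * n + j) + (6 - j))%N by lia.
have : (n.+1 %| 6 - j)%N by rewrite -(dvdn_addr _ h) -e dvdn_mull.
move/dvdn_leq; have : (0 < 6 - j)%N by lia. move=> h1 /(_ h1); lia.
Qed.

Lemma modcast (a b d : nat) : (a = b %[mod d])%N ->
  (a%:R : rat) = b%:R + d%:R * ((a %/ d)%:Z - (b %/ d)%:Z)%:~R.
Proof.
move=> h.
have e : (a = a %/ d * d + b %% d)%N by rewrite -h -divn_eq.
have e2 := divn_eq b d.
rewrite rmorphB /= -!pmulrn.
rewrite {1}e [in b%:R]e2 !natrD !natrM.
ring.
Qed.

Definition dnat n := ((6*n+5)*(6*n+4)*(6*n+3)*(6*n+2)*(6*n+1) * (2 ^ n) ^ 8)%N.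

Lemma dnat_ok n : prime n.+1 -> (6 <= n)%N -> (0 < dnat n)%N /\ ~~ (n.+1 %| dnat n)%N.
Proof.
move=> pp n6; split.
  by rewrite /dnat !muln_gt0 !expn_gt0 !addn_gt0 !orbT.
rewrite /dnat !Euclid_dvdM // !negb_or !ndvd6 //=.
have h2 : (n.+1 %| 2)%N = false by apply/negP => /dvdn_leq; lia.
by rewrite !Euclid_dvdX //= h2.
Qed.

Lemma Dp_neq0 (P : rat) : 7 <= P -> Dp P != 0.
Proof.
move=> h; rewrite /Dp; repeat apply: mulf_neq0; apply: lt0r_neq0; lra.
Qed.

Lemma gen n : prime n.+1 -> (6 <= n)%N ->
  rat_cong n.+1 4 (Fpp n.+1)
    (15 * (n.+1%:R) ^+ 2 * (-1 - 6 * n.+1%:R + 8 * n.+1%:R * fermat_quot2 n.+1)).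
Proof.
move=> pp n6.
rewrite /rat_cong /Fpp.
have -> : (18 * n.+1 - 15 = 18 * n + 3)%N by lia.
have -> : (4 * n.+1 - 4 = 4 * n)%N by lia.
have -> : (6 * n.+1 - 6 = 6 * n)%N by lia.
have -> : (3 * n.+1 - 3 = 3 * n)%N by lia.
have -> : (n.+1 - 1 = n)%N by lia.
have P0 : (n.+1%:R : rat) != 0 by rewrite pnatr_eq0.
have hP : (7 : rat) <= n.+1%:R by rewrite ler_nat; lia.
have hn1 : (1 + n%:R : rat) != 0.
  by apply: lt0r_neq0; have := ler0n rat n; lra.
have [z hz] : exists z, (2 ^ n = z * n.+1 + 1)%N.
  by exists (2 ^ n %/ n.+1)%N; apply: fermat2 => //; lia.
have hq : fermat_quot2 n.+1 = z%:R.
  rewrite /fermat_quot2 /= -natrX hz natrD natrM.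
  by field; exact: hn1.
have hQr : ((2 ^ n)%:R : rat) = 1 + n.+1%:R * fermat_quot2 n.+1.
  by rewrite hq hz natrD natrM; ring.
have hb1 := babbage 6 3 pp.
have hb2 := babbage 3 1 pp.
rewrite mul1n in hb2.
have hM : ('C(6 * n.+1, 3 * n.+1) * 'C(3 * n.+1, n.+1) = 60 %[mod n.+1 ^ 2])%N.
  by rewrite -modnMm hb1 hb2 modnMm.
have hMr := modcast hM.
set kz := (_ - _)%R in hMr.
have hF := fact_id n.
rewrite hMr natrX in hF.
pose dn := dnat n.
have hdn : (dn%:R : rat) = Dp (n.+1%:R : rat) * ((2 ^ n)%:R) ^+ 8.
  by rewrite /dn /dnat !natrM !natrX /Dp; ring.
have hQ4 : (4 : rat) ^+ (4 * n) = ((2 ^ n)%:R) ^+ 8.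
  rewrite natrX -exprM (_ : (4 : rat) = 2 ^+ 2); last by rewrite expr2.
  by rewrite -exprM; congr (_ ^+ _); lia.
exists ((Spoly (n.+1)%:Z z%:Z kz)%:~R / dn%:R); split.
  rewrite hQ4 hdn hQr natrX mor -!pmulrn -hq.
  rewrite (_ : ((18 * n + 3)%:R : rat) = 18 * n.+1%:R - 15); last first.
    rewrite -addn1 !(natrD, natrM); ring.
  rewrite -mulrA.
  apply: final_alg.
  - exact: Dp_neq0.
  - by rewrite -hQr pnatr_eq0 expn_eq0.
  - by rewrite hF.
have [h1 h2] := dnat_ok pp n6.
by apply: pint_den.
Qed.


Unset Implicit Arguments.

Theorem lemma3p1 (p : nat) (hp : prime p) (hp3 : (3 < p)%N) :
  rat_cong p 4 (Fpp p)
    (15 * (p%:R) ^+ 2 * (-1 - 6 * p%:R + 8 * p%:R * fermat_quot2 p)).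
Proof.
case: p hp hp3 => [|n] // hp hp3.
have [->|n4] := eqVneq n 4; first exact: case5.
have n5 : n != 5 by apply: contraTneq hp => ->.
have n3 : n != 3 by apply: contraTneq hp => ->.
apply: gen => //.
move/eqP: n4; move/eqP: n5; move/eqP: n3; lia.
Qed.
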